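(* Let $\overrightarrow{U}(t)$ be a closed unit timelike dual curve in the 3-dimensional dual Lorentzian space with dual Frenet frame $\{\overrightarrow{U_1},\overrightarrow{U_2},\overrightarrow{U_3}\}$, dual curvature $\kappa$ and dual torsion $\tau$, let $\Phi=\varphi+\varepsilon\varphi^*$ be a constant dual number, let $(V_1)$ be the parallel ruled surface of $(U_1)$, corresponding to $\overrightarrow{V_1}=\cosh\Phi\,\overrightarrow{U_1}+\sinh\Phi\,\overrightarrow{U_3}$, and let $(V_3)$ be the closed ruled surface corresponding to $\overrightarrow{V_3}=-\sinh\Phi\,\overrightarrow{U_1}-\cosh\Phi\,\overrightarrow{U_3}$. With $P=p+\varepsilon p^*=\kappa\cosh\Phi+\tau\sinh\Phi$ and $Q=q+\varepsilon q^*=-\kappa\sinh\Phi-\tau\cosh\Phi$, the pitch, the dual angle of pitch and the drall of $(V_3)$ are $$L_{V_3}=\oint p^*\,dt,\qquad \Lambda_{V_3}=-\oint P\,dt,\qquad P_{V_3}=\frac{q^*}{q}.$$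
   Context: Dual numbers are $\lambda+\varepsilon\lambda^*$ with $\lambda,\lambda^*\in\mathbb{R}$ and $\varepsilon^2=0$; dual vectors are $\overrightarrow{A}=\overrightarrow{a}+\varepsilon\overrightarrow{a}^*$ with $\overrightarrow{a},\overrightarrow{a}^*\in\mathbb{R}^3$. The Lorentzian inner product on $\mathbb{R}^3$ is $\langle a,b\rangle=-a_1b_1+a_2b_2+a_3b_3$, extended to dual vectors by $\langle \overrightarrow{A},\overrightarrow{B}\rangle=\langle\overrightarrow{a},\overrightarrow{b}\rangle+\varepsilon(\langle\overrightarrow{a},\overrightarrow{b}^*\rangle+\langle\overrightarrow{a}^*,\overrightarrow{b}\rangle)$. For a dual number $\Phi=\varphi+\varepsilon\varphi^*$: $\sinh\Phi=\sinh\varphi+\varepsilon\varphi^*\cosh\varphi$, $\cosh\Phi=\cosh\varphi+\varepsilon\varphi^*\sinh\varphi$. The closed unit timelike dual curve $\overrightarrow{U}(t)$ (integrals $\oint$ over one closed period of $t$) has Frenet frame $\overrightarrow{U_1}=\overrightarrow{U}$ (timelike), $\overrightarrow{U_2},\overrightarrow{U_3}$ (spacelike), mutually orthogonal unit dual vectors, satisfying $\overrightarrow{U_1}'=\kappa\overrightarrow{U_2}$, $\overrightarrow{U_2}'=\kappa\overrightarrow{U_1}-\tau\overrightarrow{U_3}$, $\overrightarrow{U_3}'=\tau\overrightarrow{U_2}$. Set $\overrightarrow{V_2}=\overrightarrow{U_2}$; then $\overrightarrow{V_1}'=P\overrightarrow{V_2}$, $\overrightarrow{V_2}'=P\overrightarrow{V_1}-Q\overrightarrow{V_3}$,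 $\overrightarrow{V_3}'=Q\overrightarrow{V_2}$. Write $\overrightarrow{V_i}=\overrightarrow{v_i}+\varepsilon\overrightarrow{v_i}^*$. The dual Steiner vector is taken (frame vectors written outside the integrals) as $\overrightarrow{D}=\overrightarrow{d}+\varepsilon\overrightarrow{d}^*=\overrightarrow{U_1}\oint\tau\,dt-\overrightarrow{U_3}\oint\kappa\,dt=-\overrightarrow{V_1}\oint Q\,dt+\overrightarrow{V_3}\oint P\,dt$, so $\overrightarrow{d}=-\overrightarrow{v_1}\oint q\,dt+\overrightarrow{v_3}\oint p\,dt$, $\overrightarrow{d}^*=-\overrightarrow{v_1}\oint q^*dt-\overrightarrow{v_1}^*\oint q\,dt+\overrightarrow{v_3}\oint p^*dt+\overrightarrow{v_3}^*\oint p\,dt$. For the closed ruled surface corresponding to a unit dual curve $\overrightarrow{X}=\overrightarrow{x}+\varepsilon\overrightarrow{x}^*$: pitch $L_X=\langle\overrightarrow{d},\overrightarrow{x}^*\rangle+\langle\overrightarrow{d}^*,\overrightarrow{x}\rangle$, dual angle of pitch $\Lambda_X=-\langle\overrightarrow{D},\overrightarrow{X}\rangle$, drall $P_X=\langle d\overrightarrow{x},d\overrightarrow{x}^*\rangle/\langle d\overrightarrow{x},d\overrightarrow{x}\rangle$. *)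

(* Defs.v *)
From Stdlib Require Import Reals.
From Coquelicot Require Import Coquelicot.
Open Scope R_scope.

Record dnum := mkD { dre : R; ddu : R }.

Definition dadd (x y : dnum) : dnum := mkD (dre x + dre y) (ddu x + ddu y).
Definition dopp (x : dnum) : dnum := mkD (- dre x) (- ddu x).
Definition dmul (x y : dnum) : dnum :=
  mkD (dre x * dre y) (dre x * ddu y + ddu x * dre y).
Definition done : dnum := mkD 1 0.
Definition dzero : dnum := mkD 0 0.

Definition dsinh (x : dnum) : dnum := mkD (sinh (dre x)) (ddu x * cosh (dre x)).
Definition dcosh (x : dnum) : dnum := mkD (cosh (dre x)) (ddu x * sinh (dre x)).

Record vec3 := mkV { c1 : R; c2 : R; c3 : R }.

Definition linner (a b : vec3) : R := - c1 a * c1 b + c2 a * c2 b + c3 a * c3 b.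

Record dvec := mkDV { vre : vec3; vdu : vec3 }.

Definition vadd (a b : vec3) : vec3 := mkV (c1 a + c1 b) (c2 a + c2 b) (c3 a + c3 b).
Definition vscal (l : R) (a : vec3) : vec3 := mkV (l * c1 a) (l * c2 a) (l * c3 a).

Definition dvadd (A B : dvec) : dvec := mkDV (vadd (vre A) (vre B)) (vadd (vdu A) (vdu B)).
Definition dscal (l : dnum) (A : dvec) : dvec :=
  mkDV (vscal (dre l) (vre A)) (vadd (vscal (dre l) (vdu A)) (vscal (ddu l) (vre A))).

Definition dinner (A B : dvec) : dnum :=
  mkD (linner (vre A) (vre B)) (linner (vre A) (vdu B) + linner (vdu A) (vre B)).

Definition vec_is_derive (x : R -> vec3) (t : R) (x' : vec3) : Prop :=
  is_derive (fun s => c1 (x s)) t (c1 x') /\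
  is_derive (fun s => c2 (x s)) t (c2 x') /\
  is_derive (fun s => c3 (x s)) t (c3 x').

Definition dvec_is_derive (X : R -> dvec) (t : R) (X' : dvec) : Prop :=
  vec_is_derive (fun s => vre (X s)) t (vre X') /\
  vec_is_derive (fun s => vdu (X s)) t (vdu X').

Definition vDerive (x : R -> vec3) (t : R) : vec3 :=
  mkV (Derive (fun s => c1 (x s)) t) (Derive (fun s => c2 (x s)) t)
      (Derive (fun s => c3 (x s)) t).

(* ---------- closed-curve integral over one period [0, T] ---------- *)
Definition oint (T : R) (f : R -> R) : R := RInt f 0 T.
Definition doint (T : R) (F : R -> dnum) : dnum :=
  mkD (oint T (fun t => dre (F t))) (oint T (fun t => ddu (F t))).

Definition V1of (Phi : dnum) (U1 U3 : R -> dvec) (t : R) : dvec :=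
  dvadd (dscal (dcosh Phi) (U1 t)) (dscal (dsinh Phi) (U3 t)).
Definition V3of (Phi : dnum) (U1 U3 : R -> dvec) (t : R) : dvec :=
  dvadd (dscal (dopp (dsinh Phi)) (U1 t)) (dscal (dopp (dcosh Phi)) (U3 t)).
Definition Pof (Phi : dnum) (kappa tau : R -> dnum) (t : R) : dnum :=
  dadd (dmul (kappa t) (dcosh Phi)) (dmul (tau t) (dsinh Phi)).
Definition Qof (Phi : dnum) (kappa tau : R -> dnum) (t : R) : dnum :=
  dadd (dopp (dmul (kappa t) (dsinh Phi))) (dopp (dmul (tau t) (dcosh Phi))).

(* dual Steiner vector D = U1 oint tau - U3 oint kappa (frame vectors outside) *)
Definition Steiner (T : R) (U1 U3 : R -> dvec) (kappa tau : R -> dnum) (t : R) : dvec :=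
  dvadd (dscal (doint T tau) (U1 t)) (dscal (dopp (doint T kappa)) (U3 t)).

Definition pitch (D X : dvec) : R :=
  linner (vre D) (vdu X) + linner (vdu D) (vre X).
Definition dual_angle_pitch (D X : dvec) : dnum := dopp (dinner D X).
Definition drall (X : R -> dvec) (t : R) : R :=
  linner (vDerive (fun s => vre (X s)) t) (vDerive (fun s => vdu (X s)) t) /
  linner (vDerive (fun s => vre (X s)) t) (vDerive (fun s => vre (X s)) t).

(* Main.v *)
Require Import Defs.
From Stdlib Require Import Reals Lra FunctionalExtensionality.
From Coquelicot Require Import Coquelicot.
Open Scope R_scope.

Lemma dnum_eq (x y : dnum) : dre x = dre y -> ddu x = ddu y -> x = y.
Proof. destruct x, y; simpl; intros -> ->; reflexivity. Qed.

Lemma dinner_bilin a b c d A B C D :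
  dinner (dvadd (dscal a A) (dscal b B)) (dvadd (dscal c C) (dscal d D)) =
  dadd (dadd (dmul (dmul a c) (dinner A C)) (dmul (dmul a d) (dinner A D)))
       (dadd (dmul (dmul b c) (dinner B C)) (dmul (dmul b d) (dinner B D))).
Proof.
  destruct a, b, c, d, A as [[] []], B as [[] []], C as [[] []], D as [[] []].
  apply dnum_eq; simpl; unfold linner; simpl; ring.
Qed.

Lemma dinner_sym A B : dinner A B = dinner B A.
Proof.
  destruct A as [[] []], B as [[] []]; apply dnum_eq; simpl; unfold linner; simpl; ring.
Qed.

Lemma RInt_lin4 (T : R) (f g h k : R -> R) (a b c d : R) :
  (forall x, continuous f x) -> (forall x, continuous g x) ->
  (forall x, continuous h x) -> (forall x, continuous k x) ->
  RInt (fun s => a * f s + b * g s + c * h s + d * k s) 0 T =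
  a * RInt f 0 T + b * RInt g 0 T + c * RInt h 0 T + d * RInt k 0 T.
Proof.
  intros Hf Hg Hh Hk.
  assert (E0 : forall u : R -> R, (forall x, continuous u x) -> ex_RInt u 0 T).
  { intros u Hu. apply (@ex_RInt_continuous R_CompleteNormedModule). intros; apply Hu. }
  assert (E : forall u : R -> R, (forall x, continuous u x) -> forall l, ex_RInt (fun s => l * u s) 0 T).
  { intros u Hu l. apply (ex_RInt_scal u 0 T l). auto. }
  assert (Sc : forall u : R -> R, (forall x, continuous u x) -> forall l,
     RInt (fun s => l * u s) 0 T = l * RInt u 0 T).
  { intros u Hu l. apply (RInt_scal u 0 T l). auto. }
  assert (X1 : ex_RInt (fun s => a * f s + b * g s) 0 T).
  { apply (ex_RInt_plus (fun s => a * f s) (fun s => b * g s)); apply E; assumption. }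
  assert (X2 : ex_RInt (fun s => a * f s + b * g s + c * h s) 0 T).
  { apply (ex_RInt_plus (fun s => a * f s + b * g s) (fun s => c * h s)); auto. }
  rewrite (RInt_plus (fun s => a * f s + b * g s + c * h s) (fun s => d * k s)); auto.
  rewrite (RInt_plus (fun s => a * f s + b * g s) (fun s => c * h s)); auto.
  rewrite (RInt_plus (fun s => a * f s) (fun s => b * g s)); auto.
  rewrite (Sc f Hf), (Sc g Hg), (Sc h Hh), (Sc k Hk). reflexivity.
Qed.

Lemma der2 g1 g2 t d1 d2 a b :
  is_derive g1 t d1 -> is_derive g2 t d2 ->
  is_derive (fun s => a * g1 s + b * g2 s) t (a * d1 + b * d2).
Proof.
  intros H1 H2. apply (is_derive_plus (fun s => a * g1 s) (fun s => b * g2 s));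
  apply is_derive_scal; auto.
Qed.

Lemma der4 g1 g2 g3 g4 t d1 d2 d3 d4 a b c d :
  is_derive g1 t d1 -> is_derive g2 t d2 -> is_derive g3 t d3 -> is_derive g4 t d4 ->
  is_derive (fun s => a * g1 s + b * g2 s + (c * g3 s + d * g4 s)) t
    (a * d1 + b * d2 + (c * d3 + d * d4)).
Proof.
  intros H1 H2 H3 H4.
  apply (is_derive_plus (fun s => a * g1 s + b * g2 s) (fun s => c * g3 s + d * g4 s));
  apply der2; auto.
Qed.
Lemma comp_der (c : vec3 -> R)
  (Hadd : forall a b, c (vadd a b) = c a + c b)
  (Hsc : forall l a, c (vscal l a) = l * c a)
  (Phi : dnum) (U1 U3 : R -> dvec) (t d1r d3r d1d d3d : R) :
  is_derive (fun s => c (vre (U1 s))) t d1r ->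
  is_derive (fun s => c (vre (U3 s))) t d3r ->
  is_derive (fun s => c (vdu (U1 s))) t d1d ->
  is_derive (fun s => c (vdu (U3 s))) t d3d ->
  Derive (fun s => c (vre (V3of Phi U1 U3 s))) t =
    (- dre (dsinh Phi)) * d1r + (- dre (dcosh Phi)) * d3r /\
  Derive (fun s => c (vdu (V3of Phi U1 U3 s))) t =
    (- dre (dsinh Phi)) * d1d + (- ddu (dsinh Phi)) * d1r +
    ((- dre (dcosh Phi)) * d3d + (- ddu (dcosh Phi)) * d3r).
Proof.
  intros A B C D; split; apply is_derive_unique.
  - eapply is_derive_ext; [| apply (der2 _ _ _ _ _ _ _ A B)].
    intro s; unfold V3of, dvadd, dscal; simpl. rewrite Hadd, !Hsc. reflexivity.
  - eapply is_derive_ext; [| apply (der4 _ _ _ _ _ _ _ _ _ _ _ _ _ C A D B)].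
    intro s; unfold V3of, dvadd, dscal; simpl. rewrite !Hadd, !Hsc. reflexivity.
Qed.

Theorem theorem2p3
  (T : R) (U1 U2 U3 : R -> dvec) (kappa tau : R -> dnum) (Phi : dnum)
  (* closed curve U = U1 with period T *)
  (HT : 0 < T)
  (Hclosed : forall t, U1 (t + T) = U1 t)
  (* orthonormal Lorentzian dual frame: U1 timelike, U2, U3 spacelike *)
  (H11 : forall t, dinner (U1 t) (U1 t) = dopp done)
  (H22 : forall t, dinner (U2 t) (U2 t) = done)
  (H33 : forall t, dinner (U3 t) (U3 t) = done)
  (H12 : forall t, dinner (U1 t) (U2 t) = dzero)
  (H13 : forall t, dinner (U1 t) (U3 t) = dzero)
  (H23 : forall t, dinner (U2 t) (U3 t) = dzero)
  (* dual Frenet equations *)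
  (F1 : forall t, dvec_is_derive U1 t (dscal (kappa t) (U2 t)))
  (F2 : forall t, dvec_is_derive U2 t
          (dvadd (dscal (kappa t) (U1 t)) (dscal (dopp (tau t)) (U3 t))))
  (F3 : forall t, dvec_is_derive U3 t (dscal (tau t) (U2 t)))
  (* regularity: curvature and torsion are continuous *)
  (Hk : forall t, continuous (fun s => dre (kappa s)) t /\
                  continuous (fun s => ddu (kappa s)) t)
  (Ht : forall t, continuous (fun s => dre (tau s)) t /\
                  continuous (fun s => ddu (tau s)) t) :
  forall t : R,
    pitch (Steiner T U1 U3 kappa tau t) (V3of Phi U1 U3 t)
      = oint T (fun s => ddu (Pof Phi kappa tau s)) /\
    dual_angle_pitch (Steiner T U1 U3 kappa tau t) (V3of Phi U1 U3 t)
      = dopp (doint T (Pof Phi kappa tau)) /\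
    drall (V3of Phi U1 U3) t
      = ddu (Qof Phi kappa tau t) / dre (Qof Phi kappa tau t).
Proof.
  intro t.
  assert (E : dinner (Steiner T U1 U3 kappa tau t) (V3of Phi U1 U3 t) = doint T (Pof Phi kappa tau)).
  { unfold Steiner, V3of. rewrite dinner_bilin, H11, H13, H33, (dinner_sym (U3 t) (U1 t)), H13.
    destruct Phi as [ph phs]. unfold doint, oint, Pof; apply dnum_eq; simpl.
    - replace (fun t0 : R => dre (kappa t0) * cosh ph + dre (tau t0) * sinh ph)
        with (fun t0 : R => cosh ph * dre (kappa t0) + sinh ph * dre (tau t0)
                + 0 * dre (kappa t0) + 0 * dre (kappa t0))
        by (apply functional_extensionality; intro; ring).
      rewrite (RInt_lin4 T); try (intro; apply Hk); try (intro; apply Ht). ring.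
    - replace (fun t0 : R => dre (kappa t0) * (phs * sinh ph) + ddu (kappa t0) * cosh ph +
         (dre (tau t0) * (phs * cosh ph) + ddu (tau t0) * sinh ph))
        with (fun t0 : R => (phs * sinh ph) * dre (kappa t0) + cosh ph * ddu (kappa t0)
                + (phs * cosh ph) * dre (tau t0) + sinh ph * ddu (tau t0))
        by (apply functional_extensionality; intro; ring).
      rewrite (RInt_lin4 T); try (intro; apply Hk); try (intro; apply Ht). ring. }
  split; [| split].
  - unfold pitch. change (ddu (dinner (Steiner T U1 U3 kappa tau t) (V3of Phi U1 U3 t)) =
      oint T (fun s => ddu (Pof Phi kappa tau s))). rewrite E. reflexivity.
  - unfold dual_angle_pitch. rewrite E. reflexivity.
  - set (q := dre (Qof Phi kappa tau t)). set (qs := ddu (Qof Phi kappa tau t)).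
    destruct (F1 t) as [[a1 [a2 a3]] [b1 [b2 b3]]].
    destruct (F3 t) as [[e1 [e2 e3]] [f1 [f2 f3]]].
    simpl in a1, a2, a3, b1, b2, b3, e1, e2, e3, f1, f2, f3.
    destruct (comp_der Defs.c1 (fun _ _ => eq_refl) (fun _ _ => eq_refl) Phi U1 U3 t _ _ _ _ a1 e1 b1 f1) as [D1 D1'].
    destruct (comp_der c2 (fun _ _ => eq_refl) (fun _ _ => eq_refl) Phi U1 U3 t _ _ _ _ a2 e2 b2 f2) as [D2 D2'].
    destruct (comp_der c3 (fun _ _ => eq_refl) (fun _ _ => eq_refl) Phi U1 U3 t _ _ _ _ a3 e3 b3 f3) as [D3 D3'].
    set (a := vre (U2 t)). set (b := vdu (U2 t)).
    assert (VR : vDerive (fun s => vre (V3of Phi U1 U3 s)) t = vscal q a).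
    { unfold vDerive. rewrite D1, D2, D3. unfold q, a, Qof, vscal; simpl. f_equal; ring. }
    assert (VD : vDerive (fun s => vdu (V3of Phi U1 U3 s)) t = vadd (vscal q b) (vscal qs a)).
    { unfold vDerive. rewrite D1', D2', D3'. unfold q, qs, a, b, Qof, vscal, vadd; simpl. f_equal; ring. }
    unfold drall. rewrite VR, VD.
    pose proof (H22 t) as H. unfold dinner in H. injection H as La Lab.
    fold a b in La, Lab.
    assert (Lab' : linner a b = 0).
    { unfold linner in *; lra. }
    assert (N : linner (vscal q a) (vadd (vscal q b) (vscal qs a)) = q*q*linner a b + q*qs*linner a a)
      by (unfold linner; simpl; ring).
    assert (Dn : linner (vscal q a) (vscal q a) = q*q*linner a a) by (unfold linner; simpl; ring).
    rewrite N, Dn, Lab', La.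
    destruct (Req_dec q 0) as [Hq|Hq].
    + rewrite Hq. unfold Rdiv. replace (0*0*1) with 0 by ring. rewrite Rinv_0. ring.
    + field. auto.
Qed.
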